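(* Let $L$ be a sharp C-lattice. (i) If $x,y\in L$ are join principal elements with $(x:y)\vee(y:x)=x\vee y$, then $x\vee y=1$. (ii) If $L$ has a unique maximal element $m$ and $m=x_1\vee\cdots\vee x_n$ with $x_1,\dots,x_n$ join principal elements, then $m=x_i$ for some $i$.
   Context: A multiplicative lattice is a complete lattice $(L,\le)$ with bottom $0$ and top $1$ which is also a commutative monoid with identity $1$ such that $a(\bigvee_\alpha b_\alpha)=\bigvee_\alpha(ab_\alpha)$ for all $a,b_\alpha\in L$. For $x,y\in L$, $(y:x)=\bigvee\{a\in L: ax\le y\}$. An element $c$ is compact if $c\le\bigvee S$ implies $c\le\bigvee T$ for some finite $T\subseteq S$. A C-lattice is a multiplicative lattice in which $1$ is compact, the product of two compact elements is compact, and every element is a join of compact elements. A maximal element is a maximal element of $L\setminus\{1\}$. An element $x$ is join principal if $y\vee(z:x)=((yx\vee z):x)$ for all $y,z\in L$. $L$ is sharp if whenever $a_1a_2\le b$ with $a_1,a_2,b\in L$, there exist $b_1,b_2\in L$ with $a_i\le b_i$ ($i=1,2$) and $b=b_1b_2$. *)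

(* Defs.v *)
From Stdlib Require Import List.

Record mult_lattice := MultLattice {
  car :> Type;
  le : car -> car -> Prop;
  sup : (car -> Prop) -> car;
  mul : car -> car -> car;
  one : car;
  le_refl : forall x, le x x;
  le_trans : forall x y z, le x y -> le y z -> le x z;
  le_antisym : forall x y, le x y -> le y x -> x = y;
  sup_ub : forall (S : car -> Prop) x, S x -> le x (sup S);
  sup_least : forall (S : car -> Prop) u, (forall x, S x -> le x u) -> le (sup S) u;
  one_top : forall x, le x one;
  mulA : forall x y z, mul x (mul y z) = mul (mul x y) z;
  mulC : forall x y, mul x y = mul y x;
  mul1x : forall x, mul one x = x;
  mul_sup : forall a (S : car -> Prop),
      mul a (sup S) = sup (fun z => exists b, S b /\ z = mul a b)
}.

Arguments le {L} : rename.
Arguments sup {L} : rename.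
Arguments mul {L} : rename.
Arguments one {L} : rename.

Section Defs.
Variable L : mult_lattice.

Definition zero : L := sup (fun _ => False).

Definition join (x y : L) : L := sup (fun z => z = x \/ z = y).

Definition bigjoin (n : nat) (x : nat -> L) : L :=
  sup (fun z => exists i, i < n /\ z = x i).

Definition colon (y x : L) : L := sup (fun a => le (mul a x) y).

Definition compact (c : L) : Prop :=
  forall S : L -> Prop, le c (sup S) ->
    exists T : list L, (forall t, In t T -> S t) /\ le c (sup (fun t => In t T)).

Definition C_lattice : Prop :=
  compact one /\
  (forall a b : L, compact a -> compact b -> compact (mul a b)) /\
  (forall x : L, x = sup (fun c => compact c /\ le c x)).

Definition maximal (m : L) : Prop :=
  m <> one /\ forall y : L, le m y -> y <> one -> y = m.

Definition join_principal (x : L) : Prop :=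
  forall y z : L, join y (colon z x) = colon (join (mul y x) z) x.

Definition sharp : Prop :=
  forall a1 a2 b : L, le (mul a1 a2) b ->
    exists b1 b2, le a1 b1 /\ le a2 b2 /\ b = mul b1 b2.

End Defs.

Arguments zero {L}.
Arguments join {L}.
Arguments bigjoin {L}.
Arguments colon {L}.
Arguments compact {L}.
Arguments maximal {L}.
Arguments join_principal {L}.
Arguments C_lattice : clear implicits.
Arguments sharp : clear implicits.

(* Main.v *)
Require Import Defs.
From Stdlib Require Import List Classical Lia.
From mathcomp Require classical_sets boolp.

Lemma asb_to (P : Prop) : boolp.asbool P = true -> P.
Proof. intro H. destruct (boolp.asboolP P); [assumption| discriminate]. Qed.
Lemma asb_of (P : Prop) : P -> boolp.asbool P = true.
Proof. intro H. destruct (boolp.asboolP P); [reflexivity| contradiction]. Qed.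

Lemma exists_max (L : mult_lattice) (h1 : compact (one : L)) (t0 : L) :
  t0 <> one -> exists m', maximal m' /\ le t0 m'.
Proof.
  intro Ht0.
  set (T := {t : L | le t0 t /\ t <> one}).
  pose (R := fun (s t : T) => boolp.asbool (le (proj1_sig s) (proj1_sig t))).
  destruct (@classical_sets.Zorn T R) as [ts Hts].
  - intro t. apply asb_of. apply le_refl.
  - intros r s t H1 H2. apply asb_of. eapply le_trans; apply asb_to; eassumption.
  - intros [s Hs] [t Ht] H1 H2. apply asb_to in H1, H2. simpl in *.
    assert (s = t) by (apply le_antisym; assumption). subst t.
    f_equal. apply proof_irrelevance.
  - intros A hA.
    destruct (classic (exists s, A s)) as [[a0 Ha0]|Hn].
    2:{ exists (exist _ t0 (conj (le_refl _ t0) Ht0)). intros s As. exfalso. apply Hn. eauto. }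
    set (S := fun z : L => exists s, A s /\ z = proj1_sig s).
    assert (Hu : sup S <> one).
    { intro E. assert (Hc : le one (sup S)) by (rewrite E; apply le_refl).
      destruct (h1 S Hc) as [l [Hl Hle]].
      assert (Hb : forall l : list L, (forall t, In t l -> S t) ->
                exists s, A s /\ forall t, In t l -> le t (proj1_sig s)).
      { induction l0 as [|t l0 IH]; intros Hl0.
        - exists a0. split; [assumption| intros t []].
        - destruct (Hl0 t (or_introl eq_refl)) as [s1 [As1 Es1]].
          destruct IH as [s2 [As2 Hs2]]. { intros u Hu. apply Hl0. right. exact Hu. }
          destruct (hA s1 s2 As1 As2) as [Hr|Hr]; apply asb_to in Hr.
          + exists s2. split; [assumption|]. intros u [<-|Hu].
            * subst t. exact Hr.
            * apply Hs2, Hu.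
          + exists s1. split; [assumption|]. intros u [<-|Hu].
            * subst t. apply le_refl.
            * eapply le_trans; [apply Hs2, Hu| exact Hr]. }
      destruct (Hb l Hl) as [s [As Hs]].
      apply (proj2 (proj2_sig s)). apply le_antisym; [apply one_top|].
      eapply le_trans; [exact Hle|]. apply sup_least. exact Hs. }
    assert (Hl0 : le t0 (sup S)).
    { eapply le_trans; [exact (proj1 (proj2_sig a0))|]. apply sup_ub.
      exists a0. split; [assumption| reflexivity]. }
    exists (exist _ (sup S) (conj Hl0 Hu)). intros s As. apply asb_of. simpl.
    apply sup_ub. exists s. split; [assumption|reflexivity].
  - destruct ts as [m [Hm1 Hm2]]. exists m. split; [|assumption].
    split; [assumption|]. intros y Hy Hy1.
    assert (Hy0 : le t0 y) by (eapply le_trans; eassumption).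
    specialize (Hts (exist _ y (conj Hy0 Hy1))). 
    assert (E : exist (fun t => le t0 t /\ t <> one) y (conj Hy0 Hy1) = exist _ m (conj Hm1 Hm2)).
    { apply Hts. apply asb_of. exact Hy. }
    apply (f_equal (@proj1_sig _ _)) in E. exact E.
Qed.


Lemma join_ub_l (L : mult_lattice) (a b : L) : le a (join a b).
Proof. apply sup_ub. auto. Qed.
Lemma join_ub_r (L : mult_lattice) (a b : L) : le b (join a b).
Proof. apply sup_ub. auto. Qed.
Lemma join_least (L : mult_lattice) (a b c : L) : le a c -> le b c -> le (join a b) c.
Proof. intros. apply sup_least. intros z [->| ->]; assumption. Qed.
Lemma join_comm (L : mult_lattice) (a b : L) : join a b = join b a.
Proof. apply le_antisym; apply join_least; (apply join_ub_l || apply join_ub_r). Qed.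

Lemma mul_join (L : mult_lattice) (a b c : L) :
  mul a (join b c) = join (mul a b) (mul a c).
Proof.
  unfold join at 1. rewrite mul_sup. apply le_antisym.
  - apply sup_least. intros z [t [[-> | ->] ->]]; [apply join_ub_l | apply join_ub_r].
  - apply join_least; apply sup_ub; eauto.
Qed.

Lemma mul_mono_r (L : mult_lattice) (a b c : L) : le b c -> le (mul a b) (mul a c).
Proof.
  intro H. assert (E : join b c = c).
  { apply le_antisym; [apply join_least; [assumption| apply le_refl] | apply join_ub_r]. }
  rewrite <- E, mul_join. apply join_ub_l.
Qed.
Lemma mul_mono_l (L : mult_lattice) (a b c : L) : le b c -> le (mul b a) (mul c a).
Proof. intro. rewrite (mulC _ b), (mulC _ c). apply mul_mono_r; assumption. Qed.
Lemma mul_le_r (L : mult_lattice) (a b : L) : le (mul a b) b.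
Proof. rewrite <- (mul1x _ b) at 2. apply mul_mono_l, one_top. Qed.
Lemma mul_le_l (L : mult_lattice) (a b : L) : le (mul a b) a.
Proof. rewrite mulC. apply mul_le_r. Qed.

Lemma colon_ub (L : mult_lattice) (t z x : L) : le (mul t x) z -> le t (colon z x).
Proof. intro. apply sup_ub. assumption. Qed.
Lemma colon_mul (L : mult_lattice) (z x : L) : le (mul (colon z x) x) z.
Proof.
  rewrite mulC. unfold colon. rewrite mul_sup. apply sup_least.
  intros u [b [Hb ->]]. rewrite mulC. exact Hb.
Qed.
Lemma colon_one (L : mult_lattice) (z x : L) : colon z x = one -> le x z.
Proof. intro E. rewrite <- (mul1x _ x), <- E. apply colon_mul. Qed.

Lemma keyG (L : mult_lattice) (hS : sharp L) (x w : L) :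
  join_principal x -> le (colon w x) (join x w) ->
  mul (join x w) (join x w) = join (mul x x) w.
Proof.
  intros Hx Hc. set (a := join x w).
  assert (h1 : le (mul a a) (join (mul x x) w)).
  { unfold a at 2. rewrite mul_join. apply join_least.
    - rewrite mulC. unfold a. rewrite mul_join. apply join_least.
      + apply join_ub_l.
      + eapply le_trans; [apply mul_le_r| apply join_ub_r].
    - eapply le_trans; [apply mul_le_r| apply join_ub_r]. }
  destruct (hS a a _ h1) as [p [q [Hp [Hq E]]]].
  assert (Hxa : le x a) by apply join_ub_l.
  assert (Hb : le (colon (join (mul x x) w) x) a).
  { rewrite <- Hx. apply join_least; assumption. }
  assert (Ep : p = a).
  { apply le_antisym; [|assumption]. eapply le_trans; [|exact Hb]. apply colon_ub.
    rewrite E. apply mul_mono_r. eapply le_trans; eassumption. }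
  assert (Eq : q = a).
  { apply le_antisym; [|assumption]. eapply le_trans; [|exact Hb]. apply colon_ub.
    rewrite E, (mulC _ p). apply mul_mono_r. eapply le_trans; eassumption. }
  rewrite E, Ep, Eq. reflexivity.
Qed.

Lemma part1 (L : mult_lattice) (hS : sharp L) (x y : L) :
  join_principal x -> join_principal y ->
  join (colon x y) (colon y x) = join x y -> join x y = one.
Proof.
  intros Hx Hy H.
  assert (Hd : le (colon y x) (join x y)) by (rewrite <- H; apply join_ub_r).
  assert (Hc : le (colon x y) (join y x)) by (rewrite join_comm, <- H; apply join_ub_l).
  pose proof (keyG L hS x y Hx Hd) as E1.
  pose proof (keyG L hS y x Hy Hc) as E2.
  rewrite (join_comm _ y x) in E2. rewrite E1 in E2.
  assert (Hx2 : le x (join (mul x x) y)) by (rewrite E2; apply join_ub_r).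
  apply le_antisym; [apply one_top|].
  assert (Hone : le one (colon (join (mul x x) y) x)).
  { apply colon_ub. rewrite mul1x. exact Hx2. }
  rewrite <- Hx in Hone. eapply le_trans; [exact Hone|].
  apply join_least; [apply join_ub_l | exact Hd].
Qed.

Lemma local_le (L : mult_lattice) (h1 : compact (one : L)) (m : L) :
  maximal m -> (forall m' : L, maximal m' -> m' = m) ->
  forall t : L, t <> one -> le t m.
Proof.
  intros Hm Hu t Ht. destruct (exists_max L h1 t Ht) as [m' [Hm' Hle]].
  rewrite <- (Hu m' Hm'). exact Hle.
Qed.

Lemma keyK (L : mult_lattice) (hS : sharp L) (h1 : compact (one : L)) (m : L) :
  maximal m -> (forall m' : L, maximal m' -> m' = m) ->
  forall x w : L, join_principal x -> join x w = m ->
  le x w \/ mul m m = join (mul x x) w.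
Proof.
  intros Hm Hu x w Hx E.
  destruct (classic (colon w x = one)) as [H|H].
  - left. apply colon_one. exact H.
  - right. rewrite <- E. apply keyG; [assumption|assumption|].
    rewrite E. apply (local_le L h1 m Hm Hu). exact H.
Qed.

Lemma two (L : mult_lattice) (hS : sharp L) (h1 : compact (one : L)) (m : L) :
  maximal m -> (forall m' : L, maximal m' -> m' = m) ->
  forall x0 w0 x1 w1 : L, join_principal x0 -> join_principal x1 ->
  join x0 w0 = m -> join x1 w1 = m -> le x0 w1 -> le x0 w0 \/ le x1 w1.
Proof.
  intros Hm Hu x0 w0 x1 w1 J0 J1 E0 E1 H01.
  destruct (keyK L hS h1 m Hm Hu x0 w0 J0 E0) as [H|K0]; [left; exact H|].
  destruct (keyK L hS h1 m Hm Hu x1 w1 J1 E1) as [H|K1]; [right; exact H|].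
  assert (Hw1 : le w1 (mul m m)) by (rewrite K1; apply join_ub_r).
  assert (Hx : le x0 (join (mul x0 x0) w0)) by (rewrite <- K0; eapply le_trans; eassumption).
  assert (Hone : le one (colon (join (mul x0 x0) w0) x0)).
  { apply colon_ub. rewrite mul1x. exact Hx. }
  rewrite <- J0 in Hone.
  destruct (classic (colon w0 x0 = one)) as [H|H]; [left; apply colon_one; exact H|].
  exfalso. apply (proj1 Hm). apply le_antisym; [apply one_top|].
  eapply le_trans; [exact Hone|]. apply join_least.
  - rewrite <- E0. apply join_ub_l.
  - apply (local_le L h1 m Hm Hu). exact H.
Qed.

Definition sh0 {L : mult_lattice} (x : nat -> L) : nat -> L := fun i => x (S i).
Definition sh1 {L : mult_lattice} (x : nat -> L) : nat -> L :=
  fun i => match i with 0 => x 0 | S k => x (S (S k)) end.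

Lemma bj1 (L : mult_lattice) (x : nat -> L) : bigjoin 1 x = x 0.
Proof.
  apply le_antisym.
  - apply sup_least. intros z [i [Hi ->]]. assert (i = 0) by lia. subst. apply le_refl.
  - apply sup_ub. exists 0. split; [lia|reflexivity].
Qed.

Lemma bjE0 (L : mult_lattice) (k : nat) (x : nat -> L) :
  bigjoin (S (S k)) x = join (x 0) (bigjoin (S k) (sh0 x)).
Proof.
  apply le_antisym.
  - apply sup_least. intros z [i [Hi ->]]. destruct i as [|j].
    + apply join_ub_l.
    + eapply le_trans; [|apply join_ub_r]. apply sup_ub. exists j. split; [lia|reflexivity].
  - apply join_least.
    + apply sup_ub. exists 0. split; [lia|reflexivity].
    + apply sup_least. intros z [i [Hi ->]]. apply sup_ub. exists (S i). split; [lia|reflexivity].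
Qed.

Lemma bjE1 (L : mult_lattice) (k : nat) (x : nat -> L) :
  bigjoin (S (S k)) x = join (x 1) (bigjoin (S k) (sh1 x)).
Proof.
  apply le_antisym.
  - apply sup_least. intros z [i [Hi ->]]. destruct i as [|[|j]].
    + eapply le_trans; [|apply join_ub_r]. apply sup_ub. exists 0. split; [lia|reflexivity].
    + apply join_ub_l.
    + eapply le_trans; [|apply join_ub_r]. apply sup_ub. exists (S j). split; [lia|reflexivity].
  - apply join_least.
    + apply sup_ub. exists 1. split; [lia|reflexivity].
    + apply sup_least. intros z [i [Hi ->]]. destruct i as [|j]; apply sup_ub.
      * exists 0. split; [lia|reflexivity].
      * exists (S (S j)). split; [lia|reflexivity].
Qed.

Lemma part2 (L : mult_lattice) (hS : sharp L) (h1 : compact (one : L)) (m : L) :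
  maximal m -> (forall m' : L, maximal m' -> m' = m) ->
  forall (n : nat) (x : nat -> L), 1 <= n ->
  (forall i, i < n -> join_principal (x i)) ->
  m = bigjoin n x -> exists i, i < n /\ m = x i.
Proof.
  intros Hm Hu n. induction n as [|n IH]; intros x Hn HJ Em; [lia|].
  destruct n as [|k].
  - exists 0. split; [lia|]. rewrite Em. apply bj1.
  - assert (H01 : le (x 0) (bigjoin (S k) (sh1 x))).
    { apply sup_ub. exists 0. split; [lia|reflexivity]. }
    destruct (two L hS h1 m Hm Hu (x 0) (bigjoin (S k) (sh0 x)) (x 1) (bigjoin (S k) (sh1 x))
                (HJ 0 ltac:(lia)) (HJ 1 ltac:(lia)) (eq_sym (eq_trans Em (bjE0 L k x)))
                (eq_sym (eq_trans Em (bjE1 L k x))) H01) as [H|H].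
    + destruct (IH (sh0 x)) as [i [Hi Ei]].
      * lia.
      * intros i Hi. apply HJ. lia.
      * rewrite Em, bjE0. apply le_antisym; [apply join_least; [exact H| apply le_refl]| apply join_ub_r].
      * exists (S i). split; [lia| exact Ei].
    + destruct (IH (sh1 x)) as [i [Hi Ei]].
      * lia.
      * intros [|i] Hi; apply HJ; lia.
      * rewrite Em, bjE1. apply le_antisym; [apply join_least; [exact H| apply le_refl]| apply join_ub_r].
      * destruct i as [|i].
        -- exists 0. split; [lia| exact Ei].
        -- exists (S (S i)). split; [lia| exact Ei].
Qed.

Theorem theorem2p5 (L : mult_lattice) (hC : C_lattice L) (hS : sharp L) :
  (forall x y : L, join_principal x -> join_principal y ->
     join (colon x y) (colon y x) = join x y -> join x y = one)
  /\
  (forall m : L, maximal m -> (forall m' : L, maximal m' -> m' = m) ->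
     forall (n : nat) (x : nat -> L), 1 <= n ->
       (forall i, i < n -> join_principal (x i)) ->
       m = bigjoin n x ->
       exists i, i < n /\ m = x i).
Proof.
  split.
  - apply part1. exact hS.
  - intros m Hm Hu. apply part2; [exact hS | exact (proj1 hC) | exact Hm | exact Hu].
Qed.
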